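(* Let $x,y>0$, let $\theta\in(0,\frac{\pi}{2})$, and let $\mathbf z=(xy\cos\theta,x^2,y^2)$. For $\theta\in(\arccos\frac{2}{\pi},\frac{\pi}{3})$ let $\beta_1\in(1,\infty)$ be the unique solution of $$\arccos\left(\frac{1}{\beta_1}\right)=\frac{(\beta_1+\cos\theta)\sqrt{\beta_1^2-1}}{\beta_1(\beta_1\cos\theta+1)}.$$ Let $\Lambda^*_-$ be as defined in the context. Then $\Lambda^*_-(\mathbf z)=\frac{x^2}{2}+\frac{y^2}{2}-1-\ln(xy)+E(\theta)$, where: - $E(\theta)=0$ if $\theta\in(0,\arccos\frac{2}{\pi}]$; - $E(\theta)=\ln\left(\frac{\pi\beta_1(\beta_1\cos\theta+1)}{2(\cos\theta+\beta_1)^2}\right)$ if $\theta\in(\arccos\frac{2}{\pi},\frac{\pi}{3})$; - $E(\theta)=\ln\left(\frac{\pi}{2(1+\cos\theta)}\right)$ if $\theta\in[\frac{\pi}{3},\frac{\pi}{2})$.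
   Context: For $\boldsymbol\lambda=(\lambda_1,\lambda_2,\lambda_3)\in\mathbb{R}^3$ let $D=\lambda_1^2-(1-2\lambda_2)(1-2\lambda_3)$, and let $$S=\{\boldsymbol\lambda:\lambda_2<\tfrac12,\ \lambda_3<\tfrac12,\ D<0\}.$$ For $\boldsymbol\lambda\in S$ put $$\Lambda(\boldsymbol\lambda)=\ln\left(\pi+2\arctan\left(\frac{\lambda_1}{\sqrt{-D}}\right)\right)-\ln\pi-\tfrac12\ln(-D).$$ This is the log moment generating function of $(\hat X\hat Y,\hat X^2,\hat Y^2)$ for independent half-normal $\hat X,\hat Y$. Define $$\Lambda^*_-(\mathbf z)=\sup_{\boldsymbol\lambda\in S,\ \lambda_1<0}\{\langle\boldsymbol\lambda,\mathbf z\rangle-\Lambda(\boldsymbol\lambda)\}.$$ *)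

(* Defs.v *)
From Stdlib Require Import Reals.
Open Scope R_scope.

Definition Dlam (l1 l2 l3 : R) : R := l1 ^ 2 - (1 - 2 * l2) * (1 - 2 * l3).

Definition in_S (l1 l2 l3 : R) : Prop :=
  l2 < 1 / 2 /\ l3 < 1 / 2 /\ Dlam l1 l2 l3 < 0.

Definition Lam (l1 l2 l3 : R) : R :=
  ln (PI + 2 * atan (l1 / sqrt (- Dlam l1 l2 l3))) - ln PI
  - / 2 * ln (- Dlam l1 l2 l3).

Definition LamStarMinus_set (z1 z2 z3 : R) (v : R) : Prop :=
  exists l1 l2 l3 : R,
    in_S l1 l2 l3 /\ l1 < 0 /\
    v = l1 * z1 + l2 * z2 + l3 * z3 - Lam l1 l2 l3.

Definition LamStarMinus_eq (z1 z2 z3 w : R) : Prop :=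
  is_lub (LamStarMinus_set z1 z2 z3) w.

Definition beta1_eq (th b : R) : Prop :=
  acos (/ b) = (b + cos th) * sqrt (b ^ 2 - 1) / (b * (b * cos th + 1)).

(* Main.v *)
Require Import Defs.
From Stdlib Require Import Reals.
From Stdlib Require Import Lra Psatz.
From Coquelicot Require Import Coquelicot.
Open Scope R_scope.

Lemma mvt (f f' : R -> R) a b : a < b ->
  (forall x, a <= x <= b -> is_derive f x (f' x)) ->
  exists xi, a < xi < b /\ f b - f a = f' xi * (b - a).
Proof.
  intros Hab Hd.
  destruct (MVT_cor2 f f' a b Hab) as [xi [H1 H2]].
  - intros x Hx. apply is_derive_Reals. now apply Hd.
  - exists xi; split; auto.
Qed.

Lemma PI_gt3 : 3 < PI.
Proof. assert (H := PI2_3_2). lra. Qed.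

Lemma sin_lb_ge e : 0 <= e -> e <= PI -> e - e^3/6 <= sin e.
Proof.
  intros H1 H2. destruct (SIN e H1 H2) as [H _].
  assert (E : sin_lb e = e - e^3/6 + e^5/120 - e^7/5040).
  { unfold sin_lb, sin_approx, sin_term; simpl. field. }
  assert (PI <= 4) by apply PI_4.
  rewrite E in H. assert (0 <= e^5/120 - e^7/5040).
  { assert (e^7 = e^5 * e^2) by ring. assert (0 <= e^5) by (apply pow_le; lra).
    assert (e^2 <= 16) by nra. assert (0 <= e^5 * (16 - e^2)) by (apply Rmult_le_pos; lra). nra. }
  lra.
Qed.

Lemma cos_lb_ge e : 0 <= e -> e <= 1 -> 1 - e^2/2 <= cos e.
Proof.
  intros H1 H2. assert (HP: PI/2 > 3/2) by apply PI2_3_2.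
  destruct (COS e ltac:(lra) ltac:(lra)) as [H _].
  assert (E : cos_lb e = 1 - e^2/2 + e^4/24 - e^6/720).
  { unfold cos_lb, cos_approx, cos_term; simpl. field. }
  rewrite E in H. assert (0 <= e^4/24 - e^6/720).
  { assert (e^6 = e^4 * e^2) by ring. assert (0 <= e^4) by (apply pow_le; lra).
    assert (e^2 <= 1) by nra. assert (0 <= e^4 * (1 - e^2)) by (apply Rmult_le_pos; lra). nra. }
  lra.
Qed.


Lemma R_pos x : 0 < x -> x <= PI/2 -> 0 < sin x - x * cos x.
Proof.
  intros H1 H2.
  destruct (mvt (fun t => sin t - t * cos t) (fun t => t * sin t) 0 x H1) as [xi [Hx E]].
  - intros t _. auto_derive; auto. ring.
  - rewrite sin_0, cos_0 in E.
    assert (0 < sin xi) by (apply sin_gt_0; assert (H := PI2_3_2); lra).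
    assert (0 < xi * sin xi * (x - 0)) by (repeat apply Rmult_lt_0_compat; lra). lra.
Qed.

Lemma sinx_dec a b : 0 < a < b -> b <= PI/2 -> a * sin b < b * sin a.
Proof.
  intros Ha Hb.
  destruct (mvt (fun t => sin t / t) (fun t => (t * cos t - sin t) / (t*t)) a b) as [xi [Hx E]].
  - lra.
  - intros t Ht. auto_derive. lra. field. lra.
  - assert (H := R_pos xi ltac:(lra) ltac:(lra)).
    assert (HH : (xi * cos xi - sin xi) / (xi * xi) < 0).
    { apply Rdiv_neg_pos; nra. }
    assert (sin b / b < sin a / a) by nra.
    assert (Ea : sin a / a * a = sin a) by (field; lra).
    assert (Eb : sin b / b * b = sin b) by (field; lra).
    assert (a * b * (sin b / b) < a * b * (sin a / a)) by (apply Rmult_lt_compat_l; nra).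
    nra.
Qed.

Definition G c p := sin p * (1 + c * cos p) - p * (c + cos p).

Lemma G_deriv c p : is_derive (G c) p (sin p * (p - 2*c*sin p)).
Proof.
  unfold G. auto_derive; auto. assert (H := sin2_cos2 p). unfold Rsqr in H.
  assert (H1 : c * (sin p * sin p + cos p * cos p - 1) = 0) by (rewrite H; ring). lra.
Qed.

Lemma G0 c : G c 0 = 0.
Proof. unfold G. rewrite sin_0. ring. Qed.

Lemma G_after c p q : 0 < c -> 0 < p < q -> q <= PI/2 -> 0 <= G c p -> 0 < G c q.
Proof.
  intros Hc Hp Hq HG.
  destruct (mvt (G c) (fun t => sin t * (t - 2*c*sin t)) 0 p) as [eta [He E]]; [lra| intros; apply G_deriv |].
  rewrite G0 in E.
  assert (Hse : 0 < sin eta) by (apply sin_gt_0; assert (H := PI2_3_2); lra).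
  assert (Heta : 0 <= eta - 2*c*sin eta).
  { assert (0 <= sin eta * (eta - 2 * c * sin eta)) by nra. nra. }
  destruct (mvt (G c) (fun t => sin t * (t - 2*c*sin t)) p q) as [xi [Hx E2]]; [lra| intros; apply G_deriv |].
  assert (Hsx : 0 < sin xi) by (apply sin_gt_0; assert (H := PI2_3_2); lra).
  assert (H := sinx_dec eta xi ltac:(lra) ltac:(lra)).
  assert (xi - 2*c*sin xi > 0).
  { assert (sin eta * (xi - 2*c*sin xi) > 0); [|nra].
    assert (eta * sin xi >= 2 * c * sin eta * sin xi) by nra. nra. }
  assert (0 < sin xi * (xi - 2 * c * sin xi) * (q - p)) by (apply Rmult_lt_0_compat; nra).
  lra.
Qed.

Lemma G_small c p : 0 <= c -> c <= 1/2 -> 0 < p -> p <= PI/2 -> 0 < G c p.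
Proof.
  intros Hc Hc2 Hp Hq.
  destruct (mvt (G c) (fun t => sin t * (t - 2*c*sin t)) 0 p) as [eta [He E]]; [lra| intros; apply G_deriv |].
  rewrite G0 in E.
  assert (Hse : 0 < sin eta) by (apply sin_gt_0; assert (H := PI2_3_2); lra).
  assert (sin eta < eta) by (apply sin_lt_x; lra).
  assert (0 < eta - 2*c*sin eta) by nra.
  assert (0 < sin eta * (eta - 2 * c * sin eta) * (p - 0)) by (apply Rmult_lt_0_compat; nra).
  lra.
Qed.

Lemma G_neg_exists c : 1/2 < c -> c < 1 -> exists p, 0 < p < PI/2 /\ G c p < 0.
Proof.
  intros Hc Hc1.
  set (p := 1 - 1/(2*c)).
  assert (Hq1 : 1/(2*c) * (2*c) = 1) by (field; lra).
  assert (Hq2 : 0 < 1/(2*c)) by (apply Rdiv_lt_0_compat; lra).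
  assert (Hp : 0 < p < 1/2) by (unfold p; split; nra).
  assert (HPI := PI2_3_2).
  exists p; split; [lra|].
  assert (Hsp := sin_lb_ge p ltac:(lra) ltac:(lra)).
  assert (Hlt : p < 2*c*sin p).
  { assert (p < 2*c*(p - p^3/6)); [|nra].
    assert (E1 : 2*c*(1-p) = 1) by (unfold p; field; lra).
    assert (E2 : 2*c*(1-p)*p = p) by (rewrite E1; ring).
    assert (0 < 2*c*(p^2*(1-p/6))) by (apply Rmult_lt_0_compat; [lra|]; apply Rmult_lt_0_compat; [nra|lra]).
    simpl in *. nra. }
  destruct (mvt (G c) (fun t => sin t * (t - 2*c*sin t)) 0 p) as [eta [He E]]; [lra| intros; apply G_deriv |].
  rewrite G0 in E.
  assert (Hse : 0 < sin eta) by (apply sin_gt_0; lra).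
  assert (Hsp0 : 0 < sin p) by (apply sin_gt_0; lra).
  assert (H := sinx_dec eta p ltac:(lra) ltac:(lra)).
  assert (eta - 2*c*sin eta < 0).
  { assert (sin p * (eta - 2*c*sin eta) < 0); [|nra].
    assert (p * sin eta < 2*c*sin p * sin eta) by nra. nra. }
  assert (0 < sin eta * (2*c*sin eta - eta) * (p - 0)) by (apply Rmult_lt_0_compat; nra).
  lra.
Qed.


Lemma lim_le A B K m : 0 < m -> 0 <= K -> (forall e, 0 < e < m -> A <= B + K * e) -> A <= B.
Proof.
  intros Hm HK H. destruct (Rle_or_lt A B) as [|HAB]; auto.
  set (e := Rmin (m/2) ((A - B)/(2*(K+1)))).
  assert (He1 : e <= m/2) by apply Rmin_l.
  assert (He2 : e <= (A-B)/(2*(K+1))) by apply Rmin_r.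
  assert (He0 : 0 < e).
  { unfold e. apply Rmin_glb_lt; [lra|]. apply Rdiv_lt_0_compat; lra. }
  assert (HH := H e ltac:(lra)).
  assert (Hk : (A-B)/(2*(K+1)) * (2*(K+1)) = A - B) by (field; lra).
  assert (K * e <= K * ((A-B)/(2*(K+1)))) by (apply Rmult_le_compat_l; lra).
  nra.
Qed.

Definition hh c p := sin p / (p * (1 + c * cos p)).

Lemma pos_k c p : 0 <= c < 1 -> 0 < 1 + c * cos p.
Proof. intros Hc. assert (H := COS_bound p). nra. Qed.

Lemma hh_deriv c p : 0 < p -> 0 <= c < 1 ->
  is_derive (hh c) p (- G c p / (p * (1 + c * cos p))^2).
Proof.
  intros Hp Hc. assert (Hk := pos_k c p Hc). unfold hh, G.
  auto_derive.
  - assert (0 < p * (1 + c * cos p)) by nra. lra.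
  - assert (H := sin2_cos2 p). unfold Rsqr in H.
    apply Rminus_diag_uniq.
    transitivity (c * p * (sin p * sin p + cos p * cos p - 1) / (p * (1 + c * cos p))^2).
    + field. lra.
    + rewrite H. field. lra.
Qed.

Lemma hh_incr c a b : 0 <= c < 1 -> 0 < a < b -> (forall t, a < t < b -> G c t < 0) -> hh c a < hh c b.
Proof.
  intros Hc Hab HG.
  destruct (mvt (hh c) (fun t => - G c t / (t * (1 + c * cos t))^2) a b) as [xi [Hx E]].
  - lra.
  - intros; apply hh_deriv; lra.
  - assert (Hk := pos_k c xi Hc).
    assert (0 < - G c xi / (xi * (1 + c * cos xi))^2).
    { apply Rdiv_lt_0_compat. assert (H := HG xi Hx). lra. apply pow_lt. nra. }
    assert (0 < - G c xi / (xi * (1 + c * cos xi))^2 * (b - a)) by (apply Rmult_lt_0_compat; lra).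
    lra.
Qed.

Lemma hh_decr c a b : 0 <= c < 1 -> 0 < a < b -> (forall t, a < t < b -> 0 < G c t) -> hh c b < hh c a.
Proof.
  intros Hc Hab HG.
  destruct (mvt (hh c) (fun t => - G c t / (t * (1 + c * cos t))^2) a b) as [xi [Hx E]].
  - lra.
  - intros; apply hh_deriv; lra.
  - assert (Hk := pos_k c xi Hc).
    assert (0 < G c xi / (xi * (1 + c * cos xi))^2).
    { apply Rdiv_lt_0_compat. apply (HG xi Hx). apply pow_lt. nra. }
    assert (0 < G c xi / (xi * (1 + c * cos xi))^2 * (b - a)) by (apply Rmult_lt_0_compat; lra).
    unfold Rdiv in *. lra.
Qed.

Lemma hh_PI2 c : hh c (PI/2) = 2/PI.
Proof.
  unfold hh. rewrite sin_PI2, cos_PI2. assert (H := PI_gt3). field. lra.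
Qed.

Lemma G_PI2 c : G c (PI/2) = 1 - c * PI/2.
Proof. unfold G. rewrite sin_PI2, cos_PI2. field. Qed.

Lemma case1_bound c p : 2/PI <= c < 1 -> 0 < p < PI/2 -> hh c p <= 2/PI.
Proof.
  intros Hc Hp. assert (HPI := PI_gt3).
  assert (Hc0 : 0 < c). { assert (0 < 2/PI) by (apply Rdiv_lt_0_compat; lra). lra. }
  rewrite <- (hh_PI2 c). left. apply hh_incr; [lra|lra|].
  intros t Ht. destruct (Rlt_or_le (G c t) 0) as [|H]; auto.
  assert (H2 := G_after c t (PI/2) Hc0 ltac:(lra) ltac:(lra) H).
  rewrite G_PI2 in H2.
  assert (c * PI >= 2). { assert (2/PI * PI = 2) by (field; lra). nra. }
  lra.
Qed.

Lemma hh_pos c p : 0 <= c < 1 -> 0 < p < PI -> 0 < hh c p.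
Proof.
  intros Hc Hp. assert (Hk := pos_k c p Hc). unfold hh.
  apply Rdiv_lt_0_compat. apply sin_gt_0; lra. nra.
Qed.

Lemma case3_bound c p : 0 < c <= 1/2 -> 0 < p < PI/2 -> hh c p <= 1/(1+c).
Proof.
  intros Hc Hp. assert (HPI := PI_gt3).
  assert (Ht := hh_pos c p ltac:(lra) ltac:(lra)).
  assert (A : hh c p * (1 + c) <= 1).
  { apply (lim_le _ _ (hh c p * c / 2) (Rmin p 1)).
    - apply Rmin_glb_lt; lra.
    - assert (0 <= hh c p * c) by nra. lra.
    - intros e He.
      assert (He1 : e < p) by (assert (H := Rmin_l p 1); lra).
      assert (He2 : e < 1) by (assert (H := Rmin_r p 1); lra).
      assert (H1 : hh c p < hh c e).
      { apply hh_decr; [lra|lra|]. intros t Ht'. apply G_small; lra. }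
      assert (Hk := pos_k c e ltac:(lra)).
      assert (H2 : hh c e * (1 + c * cos e) = sin e / e) by (unfold hh; field; lra).
      assert (H3 : sin e < e) by (apply sin_lt_x; lra).
      assert (H4 : sin e / e < 1). { apply (Rmult_lt_reg_r e); [lra|]. unfold Rdiv. rewrite Rmult_assoc, Rinv_l; lra. }
      assert (H5 := cos_lb_ge e ltac:(lra) ltac:(lra)).
      assert (H6 : hh c p * (1 + c * cos e) <= 1).
      { assert (hh c p * (1 + c * cos e) <= hh c e * (1 + c * cos e)) by (apply Rmult_le_compat_r; lra). lra. }
      assert (H7 : hh c p * (1 + c * (1 - e^2/2)) <= 1).
      { assert (hh c p * (c * (1 - e^2/2)) <= hh c p * (c * cos e)).
        { apply Rmult_le_compat_l; [lra|]. apply Rmult_le_compat_l; lra. }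
        lra. }
      assert (hh c p * c / 2 * (e^2) <= hh c p * c / 2 * e).
      { apply Rmult_le_compat_l. assert (0 <= hh c p * c) by nra. lra. simpl. nra. }
      simpl in *. nra. }
  apply (Rmult_le_reg_r (1+c)); [lra|]. unfold Rdiv. rewrite Rmult_assoc, Rinv_l; lra.
Qed.

Lemma case2_bound c p0 p : 0 < c < 1 -> 0 < p0 < PI/2 -> G c p0 = 0 -> 0 < p < PI/2 ->
  hh c p <= hh c p0.
Proof.
  intros Hc Hp0 HG Hp.
  destruct (Rtotal_order p p0) as [Hlt|[Heq|Hgt]].
  - left. apply hh_incr; [lra|lra|]. intros t Ht.
    destruct (Rlt_or_le (G c t) 0) as [|H]; auto.
    assert (H2 := G_after c t p0 ltac:(lra) ltac:(lra) ltac:(lra) H). lra.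
  - subst; lra.
  - left. apply hh_decr; [lra|lra|]. intros t Ht.
    apply (G_after c p0 t); lra.
Qed.


Ltac pos := match goal with
  | |- 0 < _ * _ => apply Rmult_lt_0_compat; pos
  | |- 0 < / _ => apply Rinv_0_lt_compat; pos
  | |- 0 < _ / _ => apply Rdiv_lt_0_compat; pos
  | _ => lra end.

Lemma ln_le_sub1 z : 0 < z -> ln z <= z - 1.
Proof. intros H. assert (E := exp_ineq1_le (ln z)). rewrite exp_ln in E; lra. Qed.

Lemma ln_hh c p : 0 <= c < 1 -> 0 < p < PI ->
  ln (PI / 2 * hh c p) = ln PI + ln (sin p) - ln 2 - ln p - ln (1 + c * cos p).
Proof.
  intros Hc Hp. assert (Hk := pos_k c p Hc). assert (HPI := PI_gt3).
  assert (Hs : 0 < sin p) by (apply sin_gt_0; lra).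
  replace (PI / 2 * hh c p) with (PI * sin p * / 2 * / p * / (1 + c * cos p)) by (unfold hh; field; repeat split; try lra; fail).
  rewrite !ln_mult, !ln_Rinv; try lra.
  all: try lra. all: pos.
Qed.

Lemma mk x y c p : 0 < x -> 0 < y -> 0 <= c < 1 -> 0 < p < PI/2 ->
  LamStarMinus_set (x*y*c) (x^2) (y^2) (x^2/2 + y^2/2 - 1 - ln (x*y) + ln (PI/2 * hh c p)).
Proof.
  intros Hx Hy Hc Hp. assert (HPI := PI_gt3).
  assert (Hk := pos_k c p Hc). set (k := 1 + c * cos p) in *.
  assert (Hs : 0 < sin p) by (apply sin_gt_0; lra).
  assert (Hco : 0 < cos p) by (apply cos_gt_0; lra).
  set (r := 1 / (k * x * y)).
  assert (Hr : 0 < r) by (unfold r; apply Rdiv_lt_0_compat; [lra|]; repeat apply Rmult_lt_0_compat; lra).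
  exists (- r * cos p), ((1 - r*y/x)/2), ((1 - r*x/y)/2).
  assert (HD : Dlam (- r * cos p) ((1 - r*y/x)/2) ((1 - r*x/y)/2) = - ((r * sin p) * (r * sin p))).
  { unfold Dlam. assert (H := sin2_cos2 p). unfold Rsqr in H.
    replace (1 - 2 * ((1 - r*y/x)/2)) with (r*y/x) by (field; lra).
    replace (1 - 2 * ((1 - r*x/y)/2)) with (r*x/y) by (field; lra).
    assert (E : r*y/x * (r*x/y) = r*r) by (field; lra). rewrite E.
    assert (r*r*(sin p * sin p + cos p * cos p - 1) = 0) by (rewrite H; ring). simpl. lra. }
  assert (Hrs : 0 < r * sin p) by (apply Rmult_lt_0_compat; lra).
  split; [|split].
  - unfold in_S. rewrite HD. split; [|split].
    + assert (0 < r*y/x) by (apply Rdiv_lt_0_compat; nra). lra.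
    + assert (0 < r*x/y) by (apply Rdiv_lt_0_compat; nra). lra.
    + nra.
  - nra.
  - unfold Lam. rewrite HD, Ropp_involutive, sqrt_square by lra.
    replace (- r * cos p / (r * sin p)) with (tan (p - PI/2)).
    2:{ unfold tan. replace (p - PI/2) with (- (PI/2 - p)) by ring.
        rewrite sin_neg, cos_neg, sin_shift, cos_shift. clear HD. clearbody r k. field. lra. }
    rewrite atan_tan by lra. 
    replace (PI + 2 * (p - PI/2)) with (2 * p) by field.
    rewrite ln_hh by lra. fold k.
    rewrite !ln_mult by lra.
    assert (Er : ln r = - ln k - ln x - ln y).
    { unfold r. unfold Rdiv. rewrite Rmult_1_l, ln_Rinv by (repeat apply Rmult_lt_0_compat; lra).
      rewrite !ln_mult by (repeat apply Rmult_lt_0_compat; lra). ring. }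
    rewrite Er.
    assert (E1 : r * k * x * y = 1) by (unfold r; field; repeat split; lra).
    unfold k in E1.
    assert (EP : - r*cos p*(x*y*c) + (1 - r*y/x)/2*x^2 + (1 - r*x/y)/2*y^2 = x^2/2 + y^2/2 - 1).
    { transitivity (x^2/2 + y^2/2 - r*(1 + c*cos p)*x*y). field; lra. rewrite E1. ring. }
    rewrite EP. lra.
Qed.

Lemma ub x y c l1 l2 l3 : 0 < x -> 0 < y -> 0 <= c < 1 -> in_S l1 l2 l3 -> l1 < 0 ->
  exists p, 0 < p < PI/2 /\
   l1*(x*y*c) + l2*x^2 + l3*y^2 - Lam l1 l2 l3 <= x^2/2 + y^2/2 - 1 - ln (x*y) + ln (PI/2 * hh c p).
Proof.
  intros Hx Hy Hc [H2 [H3 HD]] Hl1. assert (HPI := PI_gt3).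
  set (a := 1 - 2*l2). set (b := 1 - 2*l3).
  assert (Ha : 0 < a) by (unfold a; lra). assert (Hb : 0 < b) by (unfold b; lra).
  set (nd := - Dlam l1 l2 l3).
  assert (Hnd : 0 < nd) by (unfold nd; lra).
  assert (Endab : nd = a*b - l1*l1) by (unfold nd, Dlam, a, b; ring).
  set (q := sqrt nd).
  assert (Hq : 0 < q) by (apply sqrt_lt_R0; auto).
  assert (Hqq : q * q = nd) by (apply sqrt_sqrt; lra).
  set (w := l1 / q).
  assert (Hw : w < 0) by (unfold w; apply Rdiv_neg_pos; auto).
  set (s := sqrt (1 + w²)).
  assert (Hs : 0 < s) by (apply sqrt_lt_R0; unfold Rsqr; nra).
  assert (Hss : s * s = 1 + w * w) by (unfold s; rewrite sqrt_sqrt; unfold Rsqr; nra).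
  set (T := atan w).
  assert (HsT : sin T = w / s) by (unfold T, s; apply sin_atan).
  assert (HcT : cos T = 1 / s) by (unfold T, s; apply cos_atan).
  assert (HTb := atan_bound w). fold T in HTb.
  assert (HT0 : T < 0).
  { destruct (Rlt_or_le T 0) as [|HT]; auto.
    assert (0 <= sin T) by (apply sin_ge_0; lra).
    rewrite HsT in H. assert (w / s < 0) by (apply Rdiv_neg_pos; auto). lra. }
  set (p := PI/2 + T).
  exists p. split; [unfold p; lra|].
  assert (Hsp : sin p = 1 / s).
  { unfold p. rewrite sin_plus, sin_PI2, cos_PI2, HcT. ring. }
  assert (Hcp : cos p = - (w / s)).
  { unfold p. rewrite cos_plus, sin_PI2, cos_PI2, HsT. ring. }
  assert (Hk := pos_k c p Hc). set (k := 1 + c * cos p) in *.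
  unfold Lam. fold nd. fold q. fold w. fold T.
  replace (PI + 2 * T) with (2 * p) by (unfold p; field).
  rewrite ln_hh by (unfold p; lra). fold k. rewrite Hsp.
  assert (Els : ln (1/s) = - ln s) by (unfold Rdiv; rewrite Rmult_1_l; apply ln_Rinv; lra).
  rewrite Els.
  assert (Hp0 : 0 < p) by (unfold p; lra).
  rewrite <- Hqq. rewrite !ln_mult by pos.
  assert (HZ : 0 < q * x * y * s * k) by pos.
  assert (HL := ln_le_sub1 _ HZ).
  rewrite !ln_mult in HL by pos.
  assert (Ek : q * x * y * s * k = x * y * (q * s - c * l1)).
  { unfold k. rewrite Hcp. unfold w. field. lra. }
  assert (EQ : (q*s) * (q*s) = a * b).
  { replace ((q*s)*(q*s)) with ((q*q)*(s*s)) by ring.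
    assert (E2 : (q*q)*(s*s) = q*q + l1*l1) by (rewrite Hss; unfold w; field; lra).
    rewrite E2, Hqq, Endab. ring. }
  assert (Hqs : 0 < q * s) by pos.
  assert (AM : 2 * x * y * (q * s) <= a * x^2 + b * y^2).
  { destruct (Rle_or_lt (2 * x * y * (q * s)) (a * x^2 + b * y^2)) as [|Hc']; auto.
    assert (0 <= a * x^2 + b * y^2) by (simpl; nra).
    assert ((a * x^2 + b * y^2) * (a * x^2 + b * y^2) < (2 * x * y * (q * s)) * (2 * x * y * (q * s))) by nra.
    assert ((2 * x * y * (q * s)) * (2 * x * y * (q * s)) = 4 * x*x*y*y * (a * b)) by (rewrite <- EQ; ring).
    assert (0 <= Rsqr (a*x^2 - b*y^2)) by apply Rle_0_sqr. unfold Rsqr in *.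
    simpl in *. nra. }
  rewrite Ek in HL.
  unfold a, b in AM.
  assert (l1 * (x * y * c) + l2 * x ^ 2 + l3 * y ^ 2 + (x * y * (q * s - c * l1) - 1)
          <= x^2/2 + y^2/2 - 1) by (simpl in *; nra).
  lra.
Qed.




Lemma exp_le_mono a b : a <= b -> exp a <= exp b.
Proof. intros [H|H]. left; now apply exp_increasing. subst; lra. Qed.

Lemma lub_gen x y c H : 0 < x -> 0 < y -> 0 <= c < 1 -> 0 < H ->
  (forall p, 0 < p < PI/2 -> hh c p <= H) ->
  (forall K, (forall p, 0 < p < PI/2 -> PI/2 * hh c p <= K) -> PI/2 * H <= K) ->
  LamStarMinus_eq (x*y*c) (x^2) (y^2) (x^2/2 + y^2/2 - 1 - ln (x*y) + ln (PI/2 * H)).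
Proof.
  intros Hx Hy Hc HH Hb Hl. assert (HPI := PI_gt3). split.
  - intros v [l1 [l2 [l3 [HS [Hl1 Hv]]]]]. subst v.
    destruct (ub x y c l1 l2 l3 Hx Hy Hc HS Hl1) as [p [Hp Hle]].
    assert (0 < hh c p) by (apply hh_pos; lra).
    assert (ln (PI/2 * hh c p) <= ln (PI/2 * H)).
    { apply ln_le. pos. apply Rmult_le_compat_l; [lra|]. apply Hb; auto. }
    lra.
  - intros M HM.
    set (base := x^2/2 + y^2/2 - 1 - ln (x*y)) in *.
    assert (HK : PI/2 * H <= exp (M - base)).
    { apply Hl. intros p Hp.
      assert (Hv := HM _ (mk x y c p Hx Hy Hc Hp)). fold base in Hv.
      assert (0 < hh c p) by (apply hh_pos; lra).
      rewrite <- (exp_ln (PI/2 * hh c p)) by pos.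
      apply exp_le_mono. lra. }
    assert (ln (PI/2 * H) <= ln (exp (M - base))) by (apply ln_le; [pos|auto]).
    rewrite ln_exp in H0. lra.
Qed.

Lemma case1_least c K : 0 <= c < 1 ->
  (forall p, 0 < p < PI/2 -> PI/2 * hh c p <= K) -> PI/2 * (2/PI) <= K.
Proof.
  intros Hc HK. assert (HPI := PI_gt3).
  replace (PI/2 * (2/PI)) with 1 by (field; lra).
  apply (lim_le 1 K (c+1) 1); [lra|lra|].
  intros e He.
  assert (H := HK (PI/2 - e) ltac:(lra)).
  unfold hh in H.
  rewrite sin_shift, cos_shift in H.
  assert (Hce := cos_lb_ge e ltac:(lra) ltac:(lra)).
  assert (Hse : sin e < e) by (apply sin_lt_x; lra).
  assert (Hse0 : 0 < sin e) by (apply sin_gt_0; lra).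
  assert (Hd2 : 1 <= 1 + c * sin e <= 1 + c * e) by (split; nra).
  assert (Hcos0 : 0 < cos e) by nra.
  assert (X1 : cos e / (1 + c * sin e) <= PI / 2 * (cos e / ((PI/2 - e) * (1 + c * sin e)))).
  { replace (PI / 2 * (cos e / ((PI/2 - e) * (1 + c * sin e)))) with
      ((PI/2)/(PI/2 - e) * (cos e / (1 + c * sin e))) by (field; lra).
    assert (1 <= (PI/2)/(PI/2 - e)).
    { apply (Rmult_le_reg_r (PI/2 - e)); [lra|]. unfold Rdiv; rewrite Rmult_assoc, Rinv_l; lra. }
    assert (0 < cos e / (1 + c * sin e)) by pos. nra. }
  assert (X2 : (1 - e^2/2) / (1 + c * e) <= cos e / (1 + c * sin e)).
  { apply (Rmult_le_reg_r ((1 + c*e) * (1 + c * sin e))); [pos|].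
    replace ((1 - e^2/2) / (1 + c * e) * ((1 + c*e) * (1 + c * sin e))) with ((1 - e^2/2) * (1 + c * sin e)) by (field; lra).
    replace (cos e / (1 + c * sin e) * ((1 + c*e) * (1 + c * sin e))) with (cos e * (1 + c * e)) by (field; lra).
    assert (0 <= 1 - e^2/2) by (simpl; nra). nra. }
  assert (X3 : 1 - (c+1) * e <= (1 - e^2/2) / (1 + c * e)).
  { apply (Rmult_le_reg_r (1 + c*e)); [lra|].
    replace ((1 - e^2/2) / (1 + c * e) * (1 + c*e)) with (1 - e^2/2) by (field; lra).
    simpl. nra. }
  lra.
Qed.

Lemma case3_least c K : 0 <= c < 1 ->
  (forall p, 0 < p < PI/2 -> PI/2 * hh c p <= K) -> PI/2 * (1/(1+c)) <= K.
Proof.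
  intros Hc HK. assert (HPI := PI_gt3).
  set (A := PI/2 * (1/(1+c))).
  assert (HA : 0 < A) by (unfold A; pos).
  apply (lim_le A K (A/6) 1); [lra|lra|].
  intros e He.
  assert (H := HK e ltac:(lra)).
  assert (Hs := sin_lb_ge e ltac:(lra) ltac:(lra)).
  assert (Hk := pos_k c e Hc).
  assert (Hce : cos e <= 1) by apply COS_bound.
  assert (X : A * (1 - e^2/6) <= PI / 2 * hh c e).
  { unfold A, hh.
    replace (PI / 2 * (1 / (1 + c)) * (1 - e ^ 2 / 6)) with (PI/2 * ((e - e^3/6) / (e * (1 + c)))) by (field; lra).
    apply Rmult_le_compat_l; [lra|].
    apply (Rmult_le_reg_r ((e * (1 + c)) * (e * (1 + c * cos e)))); [pos|].
    replace ((e - e ^ 3 / 6) / (e * (1 + c)) * (e * (1 + c) * (e * (1 + c * cos e)))) with ((e - e^3/6) * (e * (1 + c * cos e))) by (field; lra).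
    replace (sin e / (e * (1 + c * cos e)) * (e * (1 + c) * (e * (1 + c * cos e)))) with (sin e * (e * (1 + c))) by (field; lra).
    assert (e*(e*e) <= e*1) by (apply Rmult_le_compat_l; nra).
    assert (0 <= e - e^3/6) by (simpl; lra).
    assert (c * cos e <= c * 1) by (apply Rmult_le_compat_l; lra).
    assert (e * (1 + c * cos e) <= e * (1 + c)) by (apply Rmult_le_compat_l; lra).
    assert (0 < e * (1 + c * cos e)) by pos.
    assert ((e - e^3/6) * (e * (1 + c * cos e)) <= (e - e^3/6) * (e * (1 + c))) by (apply Rmult_le_compat_l; lra).
    assert ((e - e^3/6) * (e * (1 + c)) <= sin e * (e * (1 + c))) by (apply Rmult_le_compat_r; [pos|lra]).
    lra. }
  assert (e*e <= e*1) by (apply Rmult_le_compat_l; lra).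
  assert (A*(e*e) <= A*(e*1)) by (apply Rmult_le_compat_l; lra).
  assert (A * (e^2/6) <= A / 6 * e) by (simpl; lra).
  lra.
Qed.




Lemma beta_phi' th b : 0 < cos th < 1 -> 1 < b -> beta1_eq th b ->
  0 < acos (/b) < PI/2 /\ cos (acos (/b)) = /b /\ G (cos th) (acos (/b)) = 0.
Proof.
  intros Hc Hb Heq. unfold beta1_eq in Heq. set (c := cos th) in *.
  set (p := acos (/b)) in *. assert (HPI := PI_gt3).
  assert (Hib : 0 < /b < 1).
  { split. apply Rinv_0_lt_compat; lra. rewrite <- Rinv_1. apply Rinv_lt_contravar; lra. }
  assert (Hp := acos_bound_lt (/b) ltac:(lra)). fold p in Hp.
  assert (Hcp : cos p = /b) by (apply cos_acos; lra).
  assert (Hp2 : p < PI/2).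
  { destruct (Rlt_or_le p (PI/2)) as [|H]; auto.
    assert (cos p <= 0) by (apply cos_le_0; lra). lra. }
  assert (Hsp : 0 < sin p) by (apply sin_gt_0; lra).
  set (S := sqrt (b^2 - 1)) in *.
  assert (HS : 0 <= S) by apply sqrt_pos.
  assert (HSS : S * S = b^2 - 1) by (apply sqrt_sqrt; simpl; nra).
  assert (Hsin : sin p = S / b).
  { assert (H := sin2_cos2 p). unfold Rsqr in H. rewrite Hcp in H.
    assert (E : (sin p - S/b) * (sin p + S/b) = 0).
    { replace ((sin p - S/b) * (sin p + S/b)) with (sin p * sin p - S*S/(b*b)) by (field; lra).
      rewrite HSS. replace (sin p * sin p) with (1 - /b * /b) by lra. field; lra. }
    assert (0 < sin p + S/b) by (assert (0 <= S/b) by (apply Rdiv_le_0_compat; lra); lra).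
    apply Rmult_integral in E. destruct E; lra. }
  repeat split; try lra.
  unfold G. rewrite Hsin, Hcp, Heq. field. split; nra.
Qed.

Lemma phi_beta th p : 0 < cos th < 1 -> 0 < p < PI/2 -> G (cos th) p = 0 ->
  1 < / cos p /\ beta1_eq th (/ cos p).
Proof.
  intros Hc Hp HG. unfold beta1_eq. set (c := cos th) in *. assert (HPI := PI_gt3).
  assert (Hco : 0 < cos p) by (apply cos_gt_0; lra).
  assert (Hco1 : cos p < 1) by (rewrite <- cos_0; apply cos_decreasing_1; lra).
  assert (Hsp : 0 < sin p) by (apply sin_gt_0; lra).
  split.
  { rewrite <- Rinv_1. apply Rinv_lt_contravar; lra. }
  rewrite Rinv_inv, acos_cos by lra.
  assert (H := sin2_cos2 p). unfold Rsqr in H.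
  replace ((/ cos p)^2 - 1) with ((sin p / cos p) * (sin p / cos p)) by (field_simplify; [|lra|lra]; field_simplify_eq; [lra|lra]).
  rewrite sqrt_square by (apply Rdiv_le_0_compat; lra).
  unfold G in HG.
  assert (Ep : p = sin p * (1 + c * cos p) / (c + cos p)) by (field_simplify; [|lra]; apply (Rmult_eq_reg_r (c + cos p)); [|lra]; field_simplify; lra).
  rewrite Ep at 1. field. repeat split; nra.
Qed.

Lemma hh_zero c p : 0 < c < 1 -> 0 < p < PI/2 -> G c p = 0 ->
  hh c p = / cos p * (/ cos p * c + 1) / (c + / cos p)^2.
Proof.
  intros Hc Hp HG. assert (HPI := PI_gt3).
  assert (Hco : 0 < cos p) by (apply cos_gt_0; lra).
  assert (Hsp : 0 < sin p) by (apply sin_gt_0; lra).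
  unfold G in HG. unfold hh.
  assert (Ep : p = sin p * (1 + c * cos p) / (c + cos p)) by (field_simplify; [|lra]; apply (Rmult_eq_reg_r (c + cos p)); [|lra]; field_simplify; lra).
  set (s := sin p) in *. set (co := cos p) in *. clearbody s co.
  rewrite Ep. field. repeat split; nra.
Qed.

Lemma G_cont c : continuity (G c).
Proof.
  intros t. apply continuity_pt_filterlim. apply (ex_derive_continuous (G c) t).
  eexists. apply G_deriv.
Qed.

Lemma cos_range th : 0 < th < PI/2 -> 0 < cos th < 1.
Proof.
  intros H. assert (HPI := PI_gt3). split. apply cos_gt_0; lra.
  rewrite <- cos_0. apply cos_decreasing_1; lra.
Qed.

Theorem lemma10 (x y th : R) :
  0 < x -> 0 < y -> 0 < th < PI / 2 ->
  let z1 := x * y * cos th in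
  let z2 := x ^ 2 in
  let z3 := y ^ 2 in
  let base := x ^ 2 / 2 + y ^ 2 / 2 - 1 - ln (x * y) in
  (th <= acos (2 / PI) ->
     LamStarMinus_eq z1 z2 z3 base) /\
  (acos (2 / PI) < th < PI / 3 ->
     (exists! b : R, 1 < b /\ beta1_eq th b) /\
     (forall b : R, 1 < b -> beta1_eq th b ->
        LamStarMinus_eq z1 z2 z3
          (base + ln (PI * b * (b * cos th + 1) / (2 * (cos th + b) ^ 2))))) /\
  (PI / 3 <= th ->
     LamStarMinus_eq z1 z2 z3 (base + ln (PI / (2 * (1 + cos th))))).
Proof.
  intros Hx Hy Hth. cbv zeta.
  assert (HPI := PI_gt3).
  assert (Hc := cos_range th Hth).
  assert (H2PI : 0 < 2/PI < 1).
  { split. apply Rdiv_lt_0_compat; lra. apply (Rmult_lt_reg_r PI); [lra|]. field_simplify; lra. }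
  assert (Hacos := acos_bound (2/PI)).
  assert (Hcacos : cos (acos (2/PI)) = 2/PI) by (apply cos_acos; lra).
  split; [|split].
  - intros Hle.
    assert (Hc2 : 2/PI <= cos th).
    { rewrite <- Hcacos. apply cos_decr_1; lra. }
    replace (x ^ 2 / 2 + y ^ 2 / 2 - 1 - ln (x * y)) with
      (x ^ 2 / 2 + y ^ 2 / 2 - 1 - ln (x * y) + ln (PI/2 * (2/PI))).
    2:{ replace (PI/2 * (2/PI)) with 1 by (field; lra). rewrite ln_1. ring. }
    apply lub_gen; try lra.
    + intros p Hp. apply case1_bound; lra.
    + intros K HK. apply case1_least with (cos th); [lra|auto].
  - intros Hmid.
    assert (Hc2 : cos th < 2/PI).
    { rewrite <- Hcacos. apply cos_decreasing_1; lra. }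
    assert (Hc3 : 1/2 < cos th).
    { rewrite <- cos_PI3. apply cos_decreasing_1; lra. }
    set (c := cos th) in *.
    split.
    + destruct (G_neg_exists c Hc3 ltac:(lra)) as [p1 [Hp1 HG1]].
      assert (HGpi : 0 < G c (PI/2)) by (rewrite G_PI2; assert (c * PI < 2) by (apply (Rmult_lt_reg_r (/PI)); [apply Rinv_0_lt_compat; lra|]; replace (2 * /PI) with (2/PI) by (field; lra); replace (c * PI * /PI) with c by (field; lra); lra); lra).
      destruct (IVT (G c) p1 (PI/2) (G_cont c) ltac:(lra) HG1 HGpi) as [p0 [Hp0 HG0]].
      assert (Hp0' : 0 < p0 < PI/2).
      { split. destruct (Rle_lt_or_eq_dec p1 p0 ltac:(lra)) as [|E]; [lra| subst; lra].
        destruct (Rle_lt_or_eq_dec p0 (PI/2) ltac:(lra)) as [|E]; [lra| rewrite E in HG0; lra]. }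
      destruct (phi_beta th p0 Hc Hp0' HG0) as [Hb1 Hbeq].
      exists (/ cos p0). split; [split; auto|].
      intros b' [Hb' Heq'].
      destruct (beta_phi' th b' Hc Hb' Heq') as [Hp' [Hcp' HG']].
      fold c in HG'.
      set (p' := acos (/b')) in *.
      assert (p' = p0).
      { destruct (Rtotal_order p' p0) as [Hlt|[Heq|Hgt]]; auto.
        - assert (H := G_after c p' p0 ltac:(lra) ltac:(lra) ltac:(lra) ltac:(lra)). lra.
        - assert (H := G_after c p0 p' ltac:(lra) ltac:(lra) ltac:(lra) ltac:(lra)). lra. }
      subst p'. rewrite <- H, Hcp'. rewrite Rinv_inv. reflexivity.
    + intros b Hb Heq.
      destruct (beta_phi' th b Hc Hb Heq) as [Hp [Hcp HG]].
      fold c in HG.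
      set (p := acos (/b)) in *.
      replace (PI * b * (b * c + 1) / (2 * (c + b) ^ 2)) with (PI/2 * hh c p).
      2:{ rewrite hh_zero by (auto; lra). rewrite Hcp, Rinv_inv. field; repeat split; lra. }
      apply lub_gen; try lra.
      * apply hh_pos; lra.
      * intros q Hq. apply (case2_bound c p q); auto; lra.
      * intros K HK. apply HK; auto.
  - intros Hge.
    assert (Hc3 : cos th <= 1/2).
    { rewrite <- cos_PI3. apply cos_decr_1; lra. }
    replace (PI / (2 * (1 + cos th))) with (PI/2 * (1/(1 + cos th))) by (field; lra).
    apply lub_gen; try lra.
    + apply Rdiv_lt_0_compat; lra.
    + intros p Hp. apply case3_bound; lra.
    + intros K HK. apply case3_least; [lra|auto].
Qed.
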